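(* Let $A$ be a commutative nilpotent $\mathbb{F}_p$-algebra of finite dimension $n$, and let $e\ge1$ be such that $A^e\ne 0$ and $A^{e+1}=0$. For $k\ge 0$ let $N_k=\{a\in A: x_1\cdots x_k a=0 \text{ for all } x_1,\dots,x_k\in A\}$ (so $N_0=0$ and $N_e=A$). For $x\in A$ let $q(x)=\dim_{\mathbb{F}_p}(\mathbb{F}_p x+Ax)$, and for $1\le t\le e$ let $q_t=\min_{x\in N_t\setminus N_{t-1}} q(x)$. Let $G$ be the map from $\mathbb{F}_p$-subspaces of $A$ to ideals of $A$ given by $G(V)=V+AV$. Then for each $t$ with $1\le t\le e$ and every ideal $J$ of $A$ with $J\subseteq N_t$ and $J\not\subseteq N_{t-1}$, \[ |G^{-1}(J)|\ge p^{\lfloor q_t^2/4\rfloor}. \] Consequently, \[ p^{\lfloor q_t^2/4\rfloor}\bigl(i(N_t)-i(N_{t-1})\bigr)\le s(N_t)-s(N_{t-1}), \] where for a subspace $J$ of $A$, $s(J)$ is the number of $\mathbb{F}_p$-subspaces of $J$ and, for an ideal $J$, $i(J)$ is the number of ideals of $A$ contained in $J$.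
   Context: Algebras are commutative, associative, not necessarily unital. $AV$ denotes the span of products $av$ with $a\in A$, $v\in V$. *)

(* Defs.v *)
From HB Require Import structures.
From mathcomp Require Import all_boot all_order all_algebra.
Import VectorInternalTheory.
Set Implicit Arguments. Unset Strict Implicit. Unset Printing Implicit Defensive.
Import GRing.Theory.
Local Open Scope ring_scope.

(* Subspaces of a finite vector space over a finite field form a finite type,
   so that subspaces can be counted with #|_|. *)
HB.instance Definition _ (F : finFieldType) (n : nat) :=
  [Countable of {vspace 'rV[F]_n} by <:].
HB.instance Definition _ (F : finFieldType) (n : nat) :=
  [Finite of {vspace 'rV[F]_n} by <:].

Section AlgDefs.
Variables (p n : nat).
Local Notation A := 'rV['F_p]_n.
Variable mul : A -> A -> A.

(* mul is F_p-linear in its first argument (with commutativity: bilinear). *)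
Definition mul_linear_l : Prop :=
  forall (k : 'F_p) (a b c : A), mul (k *: a + b) c = k *: mul a c + mul b c.

Definition mulAV (V : {vspace A}) : {vspace A} :=
  <<[seq mul a v | a <- enum [set: A], v <- enum [set w : A | w \in V]]>>%VS.

Definition Gmap (V : {vspace A}) : {vspace A} := (V + mulAV V)%VS.

Definition is_ideal (J : {vspace A}) : bool := (mulAV J <= J)%VS.

Definition Apow (k : nat) : {vspace A} :=
  <<[seq foldr mul a (tval xs) | a <- enum [set: A], xs <- enum [set: (k.-1).-tuple A]]>>%VS.

Definition Nset (k : nat) : {set A} :=
  [set a : A | [forall xs : k.-tuple A, foldr mul a (tval xs) == 0]].

Definition qdim (x : A) : nat :=
  \dim (<[x]> + <<[seq mul a x | a <- enum [set: A]]>>)%VS.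

(* q_t = min_{x in N_t \ N_{t-1}} q(x)  (the default n is never used when the
   range is nonempty, and q(x) <= n anyway) *)
Definition qmin (t : nat) : nat :=
  \big[minn/n]_(x in Nset t :\: Nset t.-1) qdim x.

Definition s_of (S : {set A}) : nat := #|[set U : {vspace A} | U \subset S]|.
Definition i_of (S : {set A}) : nat :=
  #|[set I : {vspace A} | is_ideal I && (I \subset S)]|.

End AlgDefs.

(* Main.v *)
Require Import Defs.
From HB Require Import structures.
From mathcomp Require Import all_boot all_order all_algebra.
From mathcomp Require Import zify ring.
Import GRing.Theory.
Set Implicit Arguments. Unset Strict Implicit. Unset Printing Implicit Defensive.
Local Open Scope ring_scope.

Lemma span_closed (K : fieldType) (vT : vectType K) (P : pred vT) (S : seq vT) :
  P 0 -> (forall k x y, P x -> P y -> P (k *: x + y)) ->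
  (forall s, s \in S -> P s) -> forall w, w \in <<S>>%VS -> P w.
Proof.
move=> P0 Pc PS w; rewrite -[S]in_tupleE => /coord_span ->.
apply: (big_ind P) => //.
  by move=> x y Px Py; rewrite -[x]scale1r; apply: Pc.
move=> i _; rewrite -[_ *: _]addr0; apply: Pc => //; apply: PS.
by rewrite mem_nth // size_tuple.
Qed.

Lemma mul_lin_r p n (mul : 'rV['F_p]_n -> 'rV['F_p]_n -> 'rV['F_p]_n) :
  mul_linear_l mul -> commutative mul ->
  forall k a b c, mul a (k *: b + c) = k *: mul a b + mul a c.
Proof. by move=> Hl Hc k a b c; rewrite Hc Hl !(Hc a). Qed.

Lemma mul0r_ p n (mul : 'rV['F_p]_n -> 'rV['F_p]_n -> 'rV['F_p]_n) :
  mul_linear_l mul -> forall a, mul 0 a = 0.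
Proof.
move=> Hl a; have := Hl 1 0 0 a; rewrite !scale1r !addr0 => H.
by apply: (@addrI _ (mul 0 a)); rewrite addr0 -H.
Qed.

Lemma mulr0_ p n (mul : 'rV['F_p]_n -> 'rV['F_p]_n -> 'rV['F_p]_n) :
  mul_linear_l mul -> commutative mul -> forall a, mul a 0 = 0.
Proof. by move=> Hl Hc a; rewrite Hc mul0r_. Qed.

Lemma mem_mulAV p n (mul : 'rV['F_p]_n -> 'rV['F_p]_n -> 'rV['F_p]_n) (V : {vspace 'rV['F_p]_n}) a v :
  v \in V -> mul a v \in mulAV mul V.
Proof.
move=> Vv; apply: memv_span; apply/allpairsP; exists (a, v).
rewrite /= !mem_enum !inE; split=> //.
Qed.

Lemma mulAV_sub p n (mul : 'rV['F_p]_n -> 'rV['F_p]_n -> 'rV['F_p]_n) (V W : {vspace 'rV['F_p]_n}) :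
  (forall a v, v \in V -> mul a v \in W) -> (mulAV mul V <= W)%VS.
Proof.
move=> H; apply/span_subvP => x /allpairsP [[a v] [_ /= vin ->]].
by apply: H; move: vin; rewrite mem_enum inE.
Qed.

Lemma mul_in_span p n (mul : 'rV['F_p]_n -> 'rV['F_p]_n -> 'rV['F_p]_n) a
   (S : seq 'rV['F_p]_n) (W : {vspace 'rV['F_p]_n}) :
  mul_linear_l mul -> commutative mul ->
  (forall s, s \in S -> mul a s \in W) -> forall w, w \in <<S>>%VS -> mul a w \in W.
Proof.
move=> Hl Hc HS; apply: (span_closed (P := fun w => mul a w \in W)) => //=.
  by rewrite mulr0_ // mem0v.
by move=> k x y Px Py; rewrite mul_lin_r // memvD // memvZ.
Qed.

Lemma mulAV_mono p n (mul : 'rV['F_p]_n -> 'rV['F_p]_n -> 'rV['F_p]_n)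
   (X Y : {vspace 'rV['F_p]_n}) :
  (X <= Y)%VS -> (mulAV mul X <= mulAV mul Y)%VS.
Proof.
by move=> /subvP XY; apply: mulAV_sub => a v Xv; apply: mem_mulAV; apply: XY.
Qed.

Lemma mulAV_add p n (mul : 'rV['F_p]_n -> 'rV['F_p]_n -> 'rV['F_p]_n)
   (X Y : {vspace 'rV['F_p]_n}) :
  mul_linear_l mul -> commutative mul ->
  (mulAV mul (X + Y) <= mulAV mul X + mulAV mul Y)%VS.
Proof.
move=> Hl Hc; apply: mulAV_sub => a v /memv_addP [x Xx [y Yy ->]].
rewrite -[x]scale1r mul_lin_r // scale1r.
by apply: memv_add; apply: mem_mulAV.
Qed.

Lemma mulAV_idem p n (mul : 'rV['F_p]_n -> 'rV['F_p]_n -> 'rV['F_p]_n)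
   (X : {vspace 'rV['F_p]_n}) :
  mul_linear_l mul -> commutative mul -> associative mul ->
  (mulAV mul (mulAV mul X) <= mulAV mul X)%VS.
Proof.
move=> Hl Hc Ha; apply: mulAV_sub => a v; apply: mul_in_span => //.
move=> s /allpairsP [[b x] [_ /= xin ->]]; rewrite Ha; apply: mem_mulAV.
by move: xin; rewrite mem_enum inE.
Qed.

Lemma iter_Apow p n (mul : 'rV['F_p]_n -> 'rV['F_p]_n -> 'rV['F_p]_n) k :
  mul_linear_l mul -> commutative mul ->
  (iter k (mulAV mul) fullv <= Apow mul k.+1)%VS.
Proof.
move=> Hl Hc; elim: k => [|k IH] /=.
  apply/subvP => x _; apply: memv_span; apply/allpairsP.
  by exists (x, [tuple]); rewrite /= !mem_enum !inE.
apply: subv_trans (mulAV_mono mul IH) _.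
apply: mulAV_sub => a v; apply: mul_in_span => //.
move=> s /allpairsP [[b xs] [_ _ ->]] /=.
apply: memv_span; apply/allpairsP.
by exists (b, [tuple of a :: xs]); rewrite /= !mem_enum !inE.
Qed.

Lemma iter_mono p n (mul : 'rV['F_p]_n -> 'rV['F_p]_n -> 'rV['F_p]_n) k
   (X Y : {vspace 'rV['F_p]_n}) :
  (X <= Y)%VS -> (iter k (mulAV mul) X <= iter k (mulAV mul) Y)%VS.
Proof. by move=> XY; elim: k => //= k IH; apply: mulAV_mono. Qed.

Lemma Gmap_eq p n (mul : 'rV['F_p]_n -> 'rV['F_p]_n -> 'rV['F_p]_n) e
   (V J : {vspace 'rV['F_p]_n}) :
  mul_linear_l mul -> commutative mul -> associative mul ->
  Apow mul e.+1 = 0%VS -> is_ideal mul J ->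
  (V <= J)%VS -> (J <= V + mulAV mul J)%VS -> Gmap mul V = J.
Proof.
move=> Hl Hc Ha He HJ VJ JV; apply/eqP; rewrite eqEsubv; apply/andP; split.
  rewrite /Gmap subv_add VJ /=; apply: subv_trans HJ; exact: mulAV_mono.
set G := Gmap mul V.
have AG : (mulAV mul G <= G)%VS.
  apply: subv_trans (mulAV_add _ _ _ _) _ => //.
  rewrite subv_add; apply/andP; split; first exact: addvSr.
  exact: subv_trans (mulAV_idem _ Hl Hc Ha) (addvSr _ _).
have claim : forall k, (J <= G + iter k (mulAV mul) J)%VS.
  elim=> [|k IH] /=; first exact: addvSr.
  apply: subv_trans JV _.
  have h1 := mulAV_mono mul IH.
  have h2 := mulAV_add (G) (iter k (mulAV mul) J) Hl Hc.
  apply: subv_trans (addvS (subvv V) (subv_trans h1 h2)) _.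
  rewrite addvA subv_add; apply/andP; split.
    rewrite subv_add; apply/andP; split; last exact: subv_trans AG (addvSl _ _).
    apply: subv_trans (addvSl _ _) (addvSl _ _).
  exact: addvSr.
have := claim e.
have : (iter e (mulAV mul) J <= 0)%VS.
  by rewrite -He; apply: (subv_trans _ (iter_Apow e Hl Hc)); apply: iter_mono; apply: subvf.
by rewrite subv0 => /eqP ->; rewrite addv0.
Qed.

Definition NV p n (mul : 'rV['F_p]_n -> 'rV['F_p]_n -> 'rV['F_p]_n) k :=
  <<enum (Nset mul k)>>%VS.

Lemma foldr_lin p n (mul : 'rV['F_p]_n -> 'rV['F_p]_n -> 'rV['F_p]_n) :
  mul_linear_l mul -> commutative mul -> forall (xs : seq 'rV['F_p]_n) c a b,
  foldr mul (c *: a + b) xs = c *: foldr mul a xs + foldr mul b xs.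
Proof. by move=> Hl Hc; elim=> //= x xs IH c a b; rewrite IH mul_lin_r. Qed.

Lemma foldr0 p n (mul : 'rV['F_p]_n -> 'rV['F_p]_n -> 'rV['F_p]_n) :
  mul_linear_l mul -> commutative mul -> forall (xs : seq 'rV['F_p]_n),
  foldr mul 0 xs = 0.
Proof. by move=> Hl Hc; elim=> //= x xs ->; rewrite mulr0_. Qed.

Lemma memNV p n (mul : 'rV['F_p]_n -> 'rV['F_p]_n -> 'rV['F_p]_n) k x :
  mul_linear_l mul -> commutative mul ->
  (x \in NV mul k) = (x \in Nset mul k).
Proof.
move=> Hl Hc; apply/idP/idP; last by move=> Hx; apply: memv_span; rewrite mem_enum.
apply: (span_closed (P := fun x => x \in Nset mul k)).
- by rewrite inE; apply/forallP => xs; rewrite foldr0.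
- move=> c a b; rewrite !inE => /forallP Ha /forallP Hb; apply/forallP => xs.
  by rewrite foldr_lin // (eqP (Ha xs)) (eqP (Hb xs)) scaler0 addr0.
- by move=> s; rewrite mem_enum.
Qed.

Lemma subset_NV p n (mul : 'rV['F_p]_n -> 'rV['F_p]_n -> 'rV['F_p]_n) k
   (V : {vspace 'rV['F_p]_n}) :
  mul_linear_l mul -> commutative mul ->
  (V \subset Nset mul k) = (V <= NV mul k)%VS.
Proof.
move=> Hl Hc; apply/subsetP/subvP => H x Vx; first by rewrite memNV //; apply: H.
by rewrite -(memNV k) //; apply: H.
Qed.

Lemma Nset_mono p n (mul : 'rV['F_p]_n -> 'rV['F_p]_n -> 'rV['F_p]_n) t :
  mul_linear_l mul -> commutative mul ->
  (Nset mul t.-1 \subset Nset mul t).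
Proof.
move=> Hl Hc; case: t => [//|t]; apply/subsetP => x; rewrite !inE => /forallP H.
apply/forallP => -[[|y ys] //= Hs].
have Hs' : size ys == t by [].
by rewrite (eqP (H (Tuple Hs'))) mulr0_.
Qed.

Lemma foldr_comm p n (mul : 'rV['F_p]_n -> 'rV['F_p]_n -> 'rV['F_p]_n) :
  commutative mul -> associative mul -> forall (xs : seq 'rV['F_p]_n) a v,
  foldr mul (mul a v) xs = mul a (foldr mul v xs).
Proof.
move=> Hc Ha; elim=> //= x xs IH a v; rewrite IH.
by rewrite Ha (Hc x a) -Ha.
Qed.

Lemma graph_count p n (J K0 : {vspace 'rV['F_p]_n}) r : prime p ->
  (K0 <= J)%VS -> (r <= \dim K0)%N ->
  (p ^ ((\dim J - r) * r) <=
     #|[set V : {vspace 'rV['F_p]_n} | (V <= J)%VS && (J <= V + K0)%VS]|)%N.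
Proof.
move=> pp KJ rK.
set X := take r (vbasis K0).
have freeX : free X.
  have := basis_free (vbasisP K0); rewrite -(cat_take_drop r (vbasis K0)); exact: catl_free.
set T := <<X>>%VS.
have dimT : \dim T = r by rewrite (eqnP freeX) size_takel // size_tuple.
have TK : (T <= K0)%VS.
  by apply/span_subvP => x /mem_take /vbasis_mem.
have TJ : (T <= J)%VS := subv_trans TK KJ.
set B := (J :\: T)%VS.
have BTJ : (B + T = J)%VS by rewrite addv_diff; apply/addv_idPl.
have BT0 : (B :&: T = 0)%VS by apply: capv_diff.
have dimB : \dim B = (\dim J - r)%N.
  by have := dimv_disjoint_sum BT0; rewrite BTJ dimT => ->; rewrite addnK.
have BJ : (B <= J)%VS by apply: diffvSl.
set dB : nat := \dim B. set dT : nat := \dim T.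
set bB := vbasis B. set tT := vbasis T.
have freeB : free bB := basis_free (vbasisP B).
have freeT : free tT := basis_free (vbasisP T).
have bBin : forall i : 'I_dB, bB`_i \in B.
  by move=> i; apply: vbasis_mem; apply: mem_nth; rewrite size_tuple.
have tTin : forall j : 'I_dT, tT`_j \in T.
  by move=> j; apply: vbasis_mem; apply: mem_nth; rewrite size_tuple.
pose w (M : 'M['F_p]_(dB, dT)) i := \sum_(j < dT) M i j *: tT`_j.
have wT : forall (M : 'M['F_p]_(dB, dT)) (i : 'I_dB), w M i \in T.
  by move=> M i; apply: rpred_sum => j _; apply: memvZ.
pose gen (M : 'M['F_p]_(dB, dT)) (i : 'I_dB) := bB`_i + w M i.
pose Phi (M : 'M['F_p]_(dB, dT)) := (\sum_(i < dB) <[gen M i]>)%VS.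
have PhiJ : forall M, (Phi M <= J)%VS.
  move=> M; apply/subv_sumP => i _; rewrite -memvE; apply: memvD.
    exact: (subvP BJ).
  exact: (subvP TJ).
have JPhi : forall M, (J <= Phi M + K0)%VS.
  move=> M; rewrite -BTJ subv_add; apply/andP; split; last first.
    exact: subv_trans TK (addvSr _ _).
  rewrite -(span_basis (vbasisP B)); apply/span_subvP => x.
  case/(nthP 0) => i; rewrite size_tuple => ilt <-.
  have -> : bB`_i = gen M (Ordinal ilt) - w M (Ordinal ilt) by rewrite addrK.
  apply: memv_add; first by rewrite memvE (sumv_sup (Ordinal ilt)).
  rewrite memvN; exact: (subvP TK).
have Phi_inj : injective Phi.
  move=> M N eqMN; apply/matrixP => k j.
  have : gen M k \in Phi N by rewrite -eqMN memvE (sumv_sup k).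
  case/memv_sumP => vs Hvs Hsum.
  have [c Hc] : exists c : 'I_dB -> 'F_p, forall i, vs i = c i *: gen N i.
    by apply: (@fin_all_exists _ (fun _ => 'F_p) (fun i k => vs i = k *: gen N i)) => i; apply/vlineP; apply: Hvs.
  move: Hsum; under eq_bigr => i _ do rewrite Hc scalerDr.
  rewrite big_split /= => Hsum.
  set u := bB`_k - \sum_i c i *: bB`_i.
  have u_eq : u = \sum_i c i *: w N i - w M k.
    rewrite /u; apply/eqP; rewrite subr_eq addrAC -subr_eq opprK addrC.
    by rewrite -Hsum /gen addrC.
  have u0 : u = 0.
    apply/eqP; rewrite -memv0 -BT0 memv_cap; apply/andP; split.
      by rewrite /u memvB // rpred_sum // => i _; apply: memvZ.
    by rewrite u_eq memvB // rpred_sum // => i _; apply: memvZ.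
  have cE : forall i, c i = (k == i)%:R.
    move=> i; move/eqP: u0; rewrite subr_eq0 => /eqP Hb.
    by rewrite -(coord_sum_free c i freeB) -Hb coord_free.
  have Hw : \sum_i c i *: w N i = w N k.
    rewrite (bigD1 k) //= cE eqxx scale1r big1 ?addr0 // => i /negPf ik.
    by rewrite cE eq_sym ik scale0r.
  move: u_eq; rewrite u0 Hw => /eqP; rewrite eq_sym subr_eq0 => /eqP HwMN.
  have e1 := coord_sum_free (M k) j freeT; have e2 := coord_sum_free (N k) j freeT.
  by rewrite -e1 -e2; congr (coord _ _ _); move: HwMN; rewrite /w => ->.
have card_img : #|Phi @: [set: 'M['F_p]_(dB, dT)]| = (#|'F_p| ^ (dB * dT))%N.
  by rewrite card_imset // cardsT card_mx.
rewrite card_Fp // in card_img.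
rewrite -dimB -dimT -/dB -/dT -card_img.
apply: subset_leq_card; apply/subsetP => V /imsetP [M _ ->].
by rewrite inE PhiJ JPhi.
Qed.

Lemma bigmin_le (I : eqType) (r : seq I) (P : pred I) (F : I -> nat) m x :
  x \in r -> P x -> (\big[minn/m]_(i <- r | P i) F i <= F x)%N.
Proof.
elim: r => //= a r IH; rewrite inE => /orP [/eqP <- | xr] Px; rewrite big_cons.
  by rewrite Px geq_minl.
case: (P a); last exact: IH.
exact: leq_trans (geq_minr _ _) (IH xr Px).
Qed.

Local Close Scope ring_scope.
Lemma arith (q d m : nat) : (q <= d)%N -> (q <= m.+1)%N -> (m <= d)%N ->
  (q ^ 2 %/ 4 <= (d - minn m d./2) * minn m d./2)%N.
Proof.
move=> h1 h2 h3.
have Hq : q ^ 2 %/ 4 <= d ^ 2 %/ 4 by apply: leq_div2r; rewrite leq_exp2r.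
have [k Hd] : exists k, d = k.*2 + odd d.
  by exists d./2; rewrite addnC odd_double_half.
case: (leqP d./2 m) => hm.
- apply: leq_trans Hq _; rewrite Hd; case: (odd d) => /=; nia.
- move: hm; rewrite Hd; case: (odd d) => /= hm; nia.
Qed.

Local Open Scope ring_scope.
Lemma mulAV_NV p n (mul : 'rV['F_p]_n -> 'rV['F_p]_n -> 'rV['F_p]_n) k :
  mul_linear_l mul -> commutative mul -> associative mul ->
  (mulAV mul (NV mul k) <= NV mul k)%VS.
Proof.
move=> Hl Hc Ha; apply: mulAV_sub => a v; rewrite !memNV // !inE => /forallP H.
by apply/forallP => xs; rewrite foldr_comm // (eqP (H xs)) mulr0_.
Qed.

Local Close Scope ring_scope.
Unset Implicit Arguments.

Theorem proposition2p4 (p n : nat) (mul : 'rV['F_p]_n -> 'rV['F_p]_n -> 'rV['F_p]_n)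
    (e : nat) :
  prime p ->
  mul_linear_l mul -> commutative mul -> associative mul ->
  (0 < e)%N -> Apow mul e != 0%VS -> Apow mul e.+1 = 0%VS ->
  forall t : nat, (1 <= t <= e)%N ->
    (forall J : {vspace 'rV['F_p]_n},
        is_ideal mul J -> J \subset Nset mul t -> ~~ (J \subset Nset mul t.-1) ->
        (p ^ ((qmin mul t) ^ 2 %/ 4) <= #|[set V : {vspace 'rV['F_p]_n} | Gmap mul V == J]|)%N)
    /\
    (p ^ ((qmin mul t) ^ 2 %/ 4) * (i_of mul (Nset mul t) - i_of mul (Nset mul t.-1))
       <= s_of (Nset mul t) - s_of (Nset mul t.-1))%N.
Proof.
move=> pp Hl Hc Ha e0 _ He t /andP[t1 te].
have part1 : forall J : {vspace 'rV['F_p]_n},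
    is_ideal mul J -> J \subset Nset mul t -> ~~ (J \subset Nset mul t.-1) ->
    (p ^ ((qmin mul t) ^ 2 %/ 4) <= #|[set V : {vspace 'rV['F_p]_n} | Gmap mul V == J]|)%N.
  move=> J HJ JN JN'.
  have [x Jx xN] := subsetPn JN'.
  have xNt : x \in Nset mul t := subsetP JN x Jx.
  have qx : (qmin mul t <= qdim mul x)%N.
    rewrite /qmin; apply: bigmin_le; first exact: mem_index_enum.
    by rewrite inE xN xNt.
  set K0 := mulAV mul J.
  have KJ : (K0 <= J)%VS := HJ.
  set S := <<[seq mul a x | a <- enum [set: 'rV['F_p]_n]]>>%VS.
  have SK : (S <= K0)%VS.
    by apply/span_subvP => y /mapP [a _ ->]; apply: mem_mulAV.
  have qd : (qdim mul x <= \dim J)%N.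
    apply: dimvS; rewrite subv_add; apply/andP; split; first by rewrite -memvE.
    exact: subv_trans SK KJ.
  have qm : (qdim mul x <= (\dim K0).+1)%N.
    rewrite /qdim -/S; have := dimv_sum_cap <[x]> S; rewrite dim_vline.
    have := dimvS SK; move=> h1 h2; apply: leq_trans (leq_addr (\dim (<[x]> :&: S)) _) _; rewrite h2; case: (x != 0%R) => /=; [rewrite add1n ltnS // | rewrite add0n; exact: leqW].
  have mJ : (\dim K0 <= \dim J)%N := dimvS KJ.
  have Hg := graph_count pp KJ (geq_minl (\dim K0) (\dim J)./2).
  apply: leq_trans (leq_trans _ Hg) _.
    apply: leq_pexp2l; first exact: prime_gt0.
    apply: leq_trans (arith qd qm mJ).
    by apply: leq_div2r; rewrite leq_exp2r.
  apply: subset_leq_card; apply/subsetP => V; rewrite !inE => /andP[VJ JV].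
  by apply/eqP; apply: (Gmap_eq Hl Hc Ha He).
split=> //.
set f := (p ^ ((qmin mul t) ^ 2 %/ 4))%N.
set St := [set U : {vspace 'rV['F_p]_n} | U \subset Nset mul t].
set St' := [set U : {vspace 'rV['F_p]_n} | U \subset Nset mul t.-1].
set It := [set I : {vspace 'rV['F_p]_n} | is_ideal mul I && (I \subset Nset mul t)].
set It' := [set I : {vspace 'rV['F_p]_n} | is_ideal mul I && (I \subset Nset mul t.-1)].
have Nm := Nset_mono t Hl Hc.
have SS : St' \subset St.
  apply/subsetP => U; rewrite !inE => H; exact: subset_trans H Nm.
have II : It' \subset It.
  apply/subsetP => U; rewrite !inE => /andP[-> H] /=; exact: subset_trans H Nm.
rewrite /s_of /i_of -/St -/St' -/It -/It'.
rewrite -(setIidPr SS) -(setIidPr II) -!cardsD.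
set S' := St :\: St'. set D := It :\: It'.
have GS : forall J V, J \in D -> Gmap mul V = J -> V \in S'.
  move=> J V; rewrite !inE negb_and => /andP[/orP HJ' /andP[HJ JN]] GV.
  have JN' : ~~ (J \subset Nset mul t.-1) by case: HJ' => // /negP; rewrite HJ.
  have VG : (V <= Gmap mul V)%VS := addvSl _ _.
  apply/andP; split; last first.
    rewrite (subset_NV _ _ Hl Hc); apply: subv_trans VG _.
    by rewrite GV -(subset_NV _ _ Hl Hc).
  apply/negP; rewrite (subset_NV _ _ Hl Hc) => VN.
  move/negP: JN'; apply; rewrite (subset_NV _ _ Hl Hc) -GV /Gmap subv_add VN /=.
  exact: subv_trans (mulAV_mono mul VN) (mulAV_NV _ Hl Hc Ha).
rewrite -[#|S'|]sum1_card (partition_big (Gmap mul) predT) //=.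
apply: leq_trans (_ : \sum_(J in D) \sum_(V in S' | Gmap mul V == J) 1 <= _)%N.
  rewrite mulnC -sum_nat_const; apply: leq_sum => J JD.
  rewrite sum1dep_card.
  have HJ : J \in D := JD.
  move: JD; rewrite !inE negb_and => /andP[/orP HJ' /andP[Jid JN]].
  have JN' : ~~ (J \subset Nset mul t.-1) by case: HJ' => // /negP; rewrite Jid.
  apply: leq_trans (part1 J Jid JN JN') _.
  apply: subset_leq_card; apply/subsetP => V; rewrite !inE => /eqP GV.
  by rewrite GV eqxx andbT; have := GS J V HJ GV; rewrite !inE.
rewrite [X in (_ <= X)%N](bigID (fun J => J \in D)) /=; exact: leq_addr.
Qed.
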